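(* The quadric $\mathcal E$ is an elliptic quadric of $\mathrm{PG}(W)\cong\mathrm{PG}(3,q)$.
   Context: $q$ is a prime power. Regard $\mathbb F_{q^6}$ as a $6$-dimensional $\mathbb F_q$-vector space. Let $F(X)=X^{q^2}-X^q+X$, an $\mathbb F_q$-linear map of $\mathbb F_{q^6}$, and $W=F(\mathbb F_{q^6})=\{z\in\mathbb F_{q^6} : z+z^q=z^{q^3}+z^{q^4}\}$, a $4$-dimensional $\mathbb F_q$-subspace, so $\mathrm{PG}(W)\cong\mathrm{PG}(3,q)$ with points $\langle z\rangle=\mathbb F_q^*z$. Let $\Phi(z)=z^{q^2}z+z^{q^2}z^{q}+z^{q}z^{q^3}$; for $z\in W$ one has $\Phi(z)\in\mathbb F_q$ and $\Phi$ is a quadratic form on $W$; $\mathcal E=\{\langle z\rangle\in\mathrm{PG}(W):\Phi(z)=0\}$. *)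

(* Defs.v *)
From HB Require Import structures.
From mathcomp Require Import all_boot all_order all_algebra all_field.
Set Implicit Arguments. Unset Strict Implicit. Unset Printing Implicit Defensive.
Import GRing.Theory.
Local Open Scope ring_scope.

(* Setting: L is a finite field with #|L| = q^6, i.e. L = F_{q^6}.
   The subfield F_q is { c | c^q = c }; L is an F_q-vector space with
   scalar multiplication given by the field multiplication. *)

Section Defs.
Variables (L : finFieldType) (q : nat).

Definition inFq (c : L) : Prop := c ^+ q = c.

Definition Fmap (x : L) : L := x ^+ (q ^ 2) - x ^+ q + x.

Definition inW (z : L) : Prop := exists x : L, z = Fmap x.

Definition Phi (z : L) : L :=
  z ^+ (q ^ 2) * z + z ^+ (q ^ 2) * z ^+ q + z ^+ q * z ^+ (q ^ 3).

Definition polar (Q : L -> L) (x y : L) : L := Q (x + y) - Q x - Q y.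

Definition Fq_dep (u v : L) : Prop :=
  exists c d : L, [/\ inFq c, inFq d, c != 0 \/ d != 0 & c * u + d * v = 0].

Definition is_quadratic_form_on_W (Q : L -> L) : Prop :=
  [/\ (forall z, inW z -> inFq (Q z)),
      (forall c z, inFq c -> inW z -> Q (c * z) = c ^+ 2 * Q z),
      (forall x y z, inW x -> inW y -> inW z ->
          polar Q (x + y) z = polar Q x z + polar Q y z)
    & (forall c x y, inFq c -> inW x -> inW y ->
          polar Q (c * x) y = c * polar Q x y)].

(* The quadric {<z> in PG(W) : Q z = 0} is an elliptic quadric of PG(W) = PG(3,q):
   Q is a nonsingular quadratic form on W of Witt index 1, i.e. the quadric
   has a point, Q has trivial singular radical, and the quadric contains no
   line (no totally singular 2-dimensional F_q-subspace of W). *)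
Definition elliptic_quadric_W (Q : L -> L) : Prop :=
  [/\ is_quadratic_form_on_W Q,
      (forall z, inW z -> Q z = 0 -> (forall w, inW w -> polar Q z w = 0) -> z = 0),
      (exists z, [/\ inW z, z != 0 & Q z = 0])
    &
      (forall u v, inW u -> inW v -> Q u = 0 -> Q v = 0 -> polar Q u v = 0 ->
          Fq_dep u v)].

End Defs.

(* Main.v *)
Require Import Defs.
From HB Require Import structures.
From mathcomp Require Import all_boot all_order all_algebra all_field.
Import GRing.Theory.
Local Open Scope ring_scope.
Set Implicit Arguments. Unset Strict Implicit.

Definition fr {L : finFieldType} (q n : nat) (y : L) : L := y ^+ (q ^ n).

Definition good (L : finFieldType) (q : nat) : Prop :=
  [/\ forall n (a b : L), (a + b) ^+ (q ^ n) = a ^+ (q ^ n) + b ^+ (q ^ n),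
      forall y : L, y ^+ (q ^ 6) = y & (1 < q)%N].

Lemma good_of (L : finFieldType) (q : nat)
  (hq : exists p k : nat, [/\ prime p, (0 < k)%N & q = (p ^ k)%N])
  (hL : #|L| = (q ^ 6)%N) : good L q.
Proof.
have [p [k [pp k0 qE]]] := hq; subst q.
have hc : p \in [pchar L].
  have e : #|L| = (p ^ (k * 6))%N by rewrite hL expnM.
  exact: (card_finPcharP e pp).
split.
- move=> n a b; apply: exprDn_pchar.
  rewrite (eq_pnat _ (pcharf_eq hc)).
  by rewrite !pnatX pnat_id.
- by move=> y; rewrite -hL expf_card.
- by rewrite -{1}(expn0 p) ltn_exp2l // prime_gt1.
Qed.

From mathcomp Require Import ring.

Section Fr.
Lemma frD (L : finFieldType) q (G : good L q) n (a b : L) : fr q n (a + b) = fr q n a + fr q n b.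
Proof. by case: G => h _ _; rewrite /fr h. Qed.
Lemma qn_gt0 (L : finFieldType) q (G : good L q) n : (0 < q ^ n)%N.
Proof. by case: G => _ _ h; rewrite expn_gt0 (ltnW h). Qed.
Lemma frz (L : finFieldType) q (G : good L q) n : fr q n (0 : L) = 0.
Proof. by rewrite /fr expr0n eqn0Ngt (qn_gt0 G). Qed.
Lemma frN (L : finFieldType) q (G : good L q) n (a : L) : fr q n (- a) = - fr q n a.
Proof. by apply/eqP; rewrite -subr_eq0 opprK -frD // addNr frz. Qed.
Lemma frB (L : finFieldType) q (G : good L q) n (a b : L) : fr q n (a - b) = fr q n a - fr q n b.
Proof. by rewrite frD // frN. Qed.
Lemma frM (L : finFieldType) q n (a b : L) : fr q n (a * b) = fr q n a * fr q n b.
Proof. by rewrite /fr exprMn. Qed.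
Lemma frV (L : finFieldType) q n (a : L) : fr q n (a^-1) = (fr q n a)^-1.
Proof. by rewrite /fr exprVn. Qed.
Lemma fr0 (L : finFieldType) q (a : L) : fr q 0 a = a.
Proof. by rewrite /fr expn0 expr1. Qed.
Lemma frfr (L : finFieldType) q m n (a : L) : fr q m (fr q n a) = fr q (Nat.add n m) a.
Proof. by rewrite /fr -exprM -expnD. Qed.
Lemma fr6 (L : finFieldType) q (G : good L q) (a : L) : fr q 6 a = a.
Proof. by case: G => _ h _; rewrite /fr h. Qed.
Lemma frS6 (L : finFieldType) q (G : good L q) n (a : L) : fr q (6 + n) a = fr q n a.
Proof. by rewrite -[(6 + n)%N]/(Nat.add 6 n) -frfr fr6. Qed.
Lemma fr1E (L : finFieldType) q (a : L) : a ^+ q = fr q 1 a.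
Proof. by rewrite /fr expn1. Qed.
Lemma frE (L : finFieldType) q n (a : L) : a ^+ (q ^ n) = fr q n a.
Proof. by []. Qed.
Lemma fr2E (L : finFieldType) q (a : L) : a ^+ (q ^ 2) = fr q 2 a.
Proof. by []. Qed.
Lemma fr3E (L : finFieldType) q (a : L) : a ^+ (q ^ 3) = fr q 3 a.
Proof. by []. Qed.
Lemma frFq (L : finFieldType) q (c : L) n : inFq q c -> fr q n c = c.
Proof.
rewrite /inFq => hc; elim: n => [|n IH]; first by rewrite fr0.
by rewrite /fr expnS mulnC exprM -/(fr q n c) IH.
Qed.
End Fr.

Lemma fr7 (L : finFieldType) q (G : good L q) (a : L) : fr q 7 a = fr q 1 a.
Proof. exact: frS6 G 1 a. Qed.
Lemma fr8 (L : finFieldType) q (G : good L q) (a : L) : fr q 8 a = fr q 2 a.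
Proof. exact: frS6 G 2 a. Qed.
Lemma fr9 (L : finFieldType) q (G : good L q) (a : L) : fr q 9 a = fr q 3 a.
Proof. exact: frS6 G 3 a. Qed.
Lemma fr10 (L : finFieldType) q (G : good L q) (a : L) : fr q 10 a = fr q 4 a.
Proof. exact: frS6 G 4 a. Qed.

Ltac frn G := match type of G with good _ ?q => rewrite ?(@frE _ q) ?(@fr1E _ q) ?(frD G, frB G, frN G, frM, frV, frfr) /=
  ?(fr6 G) ?(fr7 G) ?(fr8 G) ?(fr9 G) ?(fr10 G) ?fr0 end.

Lemma Phi_Fq (L : finFieldType) q (G : good L q) (z : L) : inW q z -> inFq q (Phi q z).
Proof.
case=> x ->; rewrite /inFq /Phi /Fmap.
frn G.
ring.
Qed.

Lemma quadform (L : finFieldType) q (G : good L q) : @is_quadratic_form_on_W L q (@Phi L q).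
Proof.
split.
- exact: Phi_Fq.
- move=> c z hc _; rewrite /Phi; frn G; rewrite !(frFq _ hc); ring.
- move=> x y z _ _ _; rewrite /polar /Phi; frn G; ring.
- move=> c x y hc _ _; rewrite /polar /Phi; frn G; rewrite !(frFq _ hc); ring.
Qed.

Lemma nonroot (L : finFieldType) (p : {poly L}) :
  p != 0 -> (size p <= #|L|)%N -> exists x, p.[x] != 0.
Proof.
move=> p0 sp; case: (pickP (fun x => p.[x] != 0)) => [x hx|hr]; first by exists x.
have : (size (enum L) < size p)%N.
  apply: max_poly_roots p0 _ (enum_uniq _).
  by apply/allP => x _; have := hr x; rewrite /root => /negbFE.
by rewrite -cardE ltnNge sp.
Qed.

Lemma size_addX (L : finFieldType) (p : {poly L}) c n N :
  (size p <= N)%N -> (n < N)%N -> (size (p + c *: 'X^n)%R <= N)%N.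
Proof.
move=> hp hn; apply: leq_trans (size_add _ _) _; rewrite geq_max hp /=.
by apply: leq_trans (size_scale_leq _ _) _; rewrite size_polyXn.
Qed.

Lemma qn1 (L : finFieldType) q (G : good L q) n : (1 == q ^ n.+1)%N = false.
Proof.
case: G => _ _ h; apply/negbTE; rewrite neq_ltn; apply/orP; left.
by rewrite -{1}(expn0 q) ltn_exp2l.
Qed.

Lemma qlt (L : finFieldType) q (G : good L q) n : (n < 6)%N -> (q ^ n < q ^ 6)%N.
Proof. by case: G => _ _ h; rewrite ltn_exp2l. Qed.

Lemma fr_eq0 (L : finFieldType) q (G : good L q) n (a : L) : (fr q n a == 0) = (a == 0).
Proof. by rewrite /fr expf_eq0 (qn_gt0 G). Qed.

Lemma nonsing (L : finFieldType) q (G : good L q) (hL : #|L| = (q ^ 6)%N) (z : L) :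
  (forall w, inW q w -> polar (@Phi L q) z w = 0) -> z = 0.
Proof.
move=> h; apply/eqP; apply/negPn/negP => nz.
pose P : {poly L} := 0 + fr q 2 z *: 'X^(q ^ 0) + fr q 3 z *: 'X^(q ^ 1)
  + (z + fr q 1 z - fr q 3 z) *: 'X^(q ^ 2) + (fr q 2 z + fr q 3 z - z) *: 'X^(q ^ 3)
  + z *: 'X^(q ^ 4) + fr q 1 z *: 'X^(q ^ 5).
have P1 : P`_1 = fr q 2 z.
  rewrite /P !coefD !coefZ !coefXn coef0 expn0 eqxx !(qn1 G).
  by rewrite !mulr0 !addr0 add0r mulr1.
have P0 : P != 0.
  by apply/eqP => P0; move: P1; rewrite P0 coef0 => /esym/eqP; rewrite (fr_eq0 G) (negbTE nz).
have sP : (size P <= #|L|)%N.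
  rewrite hL /P; do 6! (apply: size_addX; last exact: qlt G _ _).
  by rewrite size_poly0.
have [x hx] := nonroot P0 sP.
move: hx; have -> : P.[x] = polar (@Phi L q) z (Fmap q x).
  rewrite /P !hornerE /polar /Phi /Fmap; frn G; ring.
by rewrite h ?eqxx //; exists x.
Qed.

Lemma noline (L : finFieldType) q (G : good L q) (u v : L) :
  Phi q u = 0 -> Phi q v = 0 -> polar (@Phi L q) u v = 0 -> Fq_dep q u v.
Proof.
move=> hu hv huv.
set D := u * fr q 1 v - fr q 1 u * v.
have key : - (fr q 1 D * D) = fr q 1 v ^+ 2 * Phi q u + fr q 1 u ^+ 2 * Phi q v
   - fr q 1 u * fr q 1 v * polar (@Phi L q) u v.
  rewrite /D /polar /Phi; frn G; ring.
have D0 : D = 0.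
  move: key; rewrite hu hv huv !mulr0 !subr0 addr0 => /eqP.
  by rewrite oppr_eq0 mulf_eq0 (fr_eq0 G) orbb => /eqP.
have [->|u0] := eqVneq u 0.
  exists 1, 0; split; rewrite /inFq ?expr1n ?expr0n ?oner_eq0 ?(qn_gt0 G 1) //=.
  - by case: G => _ _ h; rewrite eqn0Ngt (ltnW h).
  - by left.
  - by rewrite mulr0 mul0r addr0.
exists (- (v / u)), 1; split; rewrite /inFq ?expr1n //.
- have hfu : fr q 1 u != 0 by rewrite (fr_eq0 G).
  rewrite fr1E (frN G) frM frV; congr (- _).
  apply/eqP; rewrite eqr_div // mulrC [v * _]mulrC -subr_eq0.
  by apply/eqP.
- by right; rewrite oner_eq0.
- by rewrite mul1r mulNr divfK // addNr.
Qed.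

Lemma point (L : finFieldType) q (G : good L q) (hL : #|L| = (q ^ 6)%N) :
  exists z : L, [/\ inW q z, z != 0 & Phi q z = 0].
Proof.
have [s hs] : exists s : L, s + fr q 3 s != 0.
  pose P : {poly L} := 0 + 1 *: 'X^(q ^ 0) + 1 *: 'X^(q ^ 3).
  have P1 : P`_1 = 1.
    rewrite /P !coefD !coefZ !coefXn coef0 expn0 eqxx !(qn1 G).
    by rewrite !mulr0 !addr0 add0r mulr1.
  have P0 : P != 0 by apply/eqP => P0; move: P1; rewrite P0 coef0 => /esym/eqP; rewrite oner_eq0.
  have sP : (size P <= #|L|)%N.
    rewrite hL /P; do 2! (apply: size_addX; last exact: qlt G _ _).
    by rewrite size_poly0.
  have [x hx] := nonroot P0 sP; exists x; move: hx.
  by rewrite /P !hornerE; frn G.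
have [t t3] : exists t : L, t + fr q 3 t = 1.
  exists (s / (s + fr q 3 s)); frn G.
  by rewrite [fr q 3 s + s]addrC -mulrDl divff.
have [d [dn0 d3 dsum]] : exists d : L,
    [/\ d != 0, fr q 3 d = d & d + fr q 1 d + fr q 2 d = 0].
  have [y hy] : exists y : L, y + fr q 3 y - fr q 1 y - fr q 4 y != 0.
    pose P : {poly L} := 0 + 1 *: 'X^(q ^ 0) + 1 *: 'X^(q ^ 3) + (-1) *: 'X^(q ^ 1)
      + (-1) *: 'X^(q ^ 4).
    have P1 : P`_1 = 1.
      rewrite /P !coefD !coefZ !coefXn coef0 expn0 eqxx !(qn1 G).
      by rewrite !mulr0 !addr0 add0r mulr1.
    have P0 : P != 0 by apply/eqP => P0; move: P1; rewrite P0 coef0 => /esym/eqP; rewrite oner_eq0.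
    have sP : (size P <= #|L|)%N.
      rewrite hL /P; do 4! (apply: size_addX; last exact: qlt G _ _).
      by rewrite size_poly0.
    have [x hx] := nonroot P0 sP; exists x; move: hx.
    by rewrite /P !hornerE; frn G; rewrite !mulN1r.
  exists (y + fr q 3 y - fr q 1 y - fr q 4 y); split => //; frn G; ring.
have d1 : fr q 1 d != 0 by rewrite (fr_eq0 G).
have d2 : fr q 2 d != 0 by rewrite (fr_eq0 G).
pose x := d^-1 * t + fr q 1 (d^-1 * t).
have Fx : Fmap q x = d^-1.
  rewrite /Fmap /x; frn G; rewrite d3.
  apply: (@eq_trans _ _ (d^-1 * (t + fr q 3 t))); first ring.
  by rewrite t3 mulr1.
exists (Fmap q x); split; first by exists x.
  by rewrite Fx invr_eq0.
rewrite Fx /Phi; frn G; rewrite d3.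
have e : fr q 2 d = - (d + fr q 1 d) by apply/eqP; rewrite -addr_eq0 addrC dsum.
rewrite e; field.
by rewrite -e d2 d1 dn0.
Qed.

Theorem mainTheorem16 (L : finFieldType) (q : nat)
  (hq : exists p k : nat, [/\ prime p, (0 < k)%N & q = (p ^ k)%N])
  (hL : #|L| = (q ^ 6)%N) :
  @elliptic_quadric_W L q (@Phi L q).
Proof.
have G := good_of hq hL.
split.
- exact: quadform.
- by move=> z _ _ h; apply: (nonsing G hL).
- exact: point.
- by move=> u v _ _; apply: noline.
Qed.
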